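(* Let $G$ be a commutative group, $H$ a torsion-free subgroup, $G'=G/H$ and $\varphi:G\to G'$ the natural homomorphism. Let $U\subset G$ be finite and let $\vartheta$ be any of the functionals $\alpha,\alpha',\alpha'',\beta_p$ ($1<p<\infty$), $\beta',\beta''$, where $\vartheta(U)$ is computed in $G$ and $\vartheta(C_\varphi(U))$ is computed in $G'\times\mathbb{Z}$. Then $\vartheta(C_\varphi(U))\le\vartheta(U)$.
   Context: The compression along $\varphi$ maps a finite $A\subset G$ to the finite set $C_\varphi(A)=\bigcup_{x\in\varphi(A)}\{x\}\times\{0,1,\dots,|A\cap\varphi^{-1}(x)|-1\}\subset G'\times\mathbb{Z}$. For a finite set $U$ in a commutative group $K$, with $A,B$ ranging over nonempty finite subsets of $K$: $\alpha(U)=\inf_{A\supset U,B\supset U}\frac{|A+B|}{\sqrt{|A||B|}}$; $\alpha'(U)=\inf_{A\supset U,B\supset U,|A|=|B|}\frac{|A+B|}{|A|}$; $\alpha''(U)=\inf_{A\supset U}\frac{|A+A|}{|A|}$; $\beta_p(U)=\inf_{A,B}\frac{|A+B+U|}{|A|^{1/p}|B|^{1-1/p}}$; $\beta'(U)=\inf_{A,B,|A|=|B|}\frac{|A+B+U|}{\sqrt{|A||B|}}$; $\beta''(U)=\inf_{A}\frac{|A+A+U|}{|A|}$. *)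

(* Defs.v *)
From HB Require Import structures.
From mathcomp Require Import all_boot all_order all_algebra finmap.
From mathcomp Require Import classical_sets reals exp.
Set Implicit Arguments. Unset Strict Implicit. Unset Printing Implicit Defensive.
Import Order.TTheory GRing.Theory Num.Theory.

Local Open Scope fset_scope.
Local Open Scope ring_scope.

Section Defs.
Variable R : realType.

Definition sumset (K : zmodType) (A B : {fset K}) : {fset K} :=
  [fset a + b | a in A, b in B].

Definition compress (G G' : zmodType) (phi : G -> G') (A : {fset G})
  : {fset G' * int} :=
  \bigcup_(x <- phi @` A)
     [fset ((x, (k%:Z)) : G' * int) | k in iota 0 #|` [fset a in A | phi a == x]|].

Definition card_R (K : choiceType) (A : {fset K}) : R := (#|` A|)%:R.

Definition alpha (K : zmodType) (U : {fset K}) : R :=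
  inf [set r : R | exists (A B : {fset K}),
        [/\ A != fset0, B != fset0, fsubset U A, fsubset U B &
            r = card_R (sumset A B) / Num.sqrt (card_R A * card_R B)]].

Definition alpha' (K : zmodType) (U : {fset K}) : R :=
  inf [set r : R | exists (A B : {fset K}),
        [/\ A != fset0, B != fset0, fsubset U A, fsubset U B &
            #|` A| = #|` B| /\ r = card_R (sumset A B) / card_R A]].

Definition alpha'' (K : zmodType) (U : {fset K}) : R :=
  inf [set r : R | exists (A : {fset K}),
        [/\ A != fset0, fsubset U A &
            r = card_R (sumset A A) / card_R A]].

Definition beta_p (p : R) (K : zmodType) (U : {fset K}) : R :=
  inf [set r : R | exists (A B : {fset K}),
        [/\ A != fset0, B != fset0 &
            r = card_R (sumset (sumset A B) U) /
                (card_R A `^ (p^-1) * card_R B `^ (1 - p^-1))]].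

Definition beta' (K : zmodType) (U : {fset K}) : R :=
  inf [set r : R | exists (A B : {fset K}),
        [/\ A != fset0, B != fset0, #|` A| = #|` B| &
            r = card_R (sumset (sumset A B) U) / Num.sqrt (card_R A * card_R B)]].

Definition beta'' (K : zmodType) (U : {fset K}) : R :=
  inf [set r : R | exists (A : {fset K}),
        A != fset0 /\ r = card_R (sumset (sumset A A) U) / card_R A].

End Defs.

(* Main.v *)
Require Import Defs.
From HB Require Import structures.
From mathcomp Require Import all_boot all_order all_algebra finmap.
From mathcomp Require Import classical_sets reals exp.
From mathcomp Require Import zify.
Import Order.TTheory GRing.Theory Num.Theory.
Local Open Scope ring_scope.

Module Helpers.
Set Implicit Arguments. Unset Strict Implicit.
Local Open Scope fset_scope.
Local Open Scope ring_scope.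

Definition fib (G G' : zmodType) (phi : G -> G') (A : {fset G}) (x : G') :=
  [fset a in A | phi a == x].

Lemma in_compress (G G' : zmodType) (phi : G -> G') (A : {fset G}) x (k : int) :
  ((x, k) \in compress phi A) = (0 <= k)%R && (absz k < #|` fib phi A x|)%N.
Proof.
apply/bigfcupP/idP.
  case=> i /andP[iA _] /imfsetP[k' /= + [-> ->]].
  by rewrite mem_iota add0n /= => ->.
case/andP; case: k => // n _ /= lt.
case: (fset_0Vmem (fib phi A x)) lt => [->|[a]]; first by rewrite cardfs0.
rewrite !inE /= => /andP[aA /eqP pa] lt.
exists x; first by rewrite andbT; apply/imfsetP; exists a.
by apply/imfsetP; exists n => //=; rewrite mem_iota add0n.
Qed.

Lemma card_fib1U (G G' : zmodType) (phi : G -> G') (X : {fset G}) a y :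
  a \notin X -> #|` fib phi (a |` X) y| = ((phi a == y) + #|` fib phi X y|)%N.
Proof.
move=> aX; have [e|ne] := eqVneq (phi a) y.
  have -> : fib phi (a |` X) y = a |` fib phi X y.
    by apply/fsetP => z; rewrite !inE; case: eqVneq => // ->; rewrite e eqxx.
  by rewrite cardfsU1 !inE (negPf aX).
rewrite add0n; congr (#|` _|); apply/fsetP => z; rewrite !inE; case: eqVneq => // ->.
by rewrite (negPf aX) (negPf ne).
Qed.

Lemma compress1U (G G' : zmodType) (phi : G -> G') (X : {fset G}) a :
  a \notin X -> compress phi (a |` X) =
     (phi a, (#|` fib phi X (phi a)|)%:Z) |` compress phi X.
Proof.
move=> aX; apply/fsetP => -[y k]; rewrite in_fset1U !in_compress card_fib1U //.
rewrite xpair_eqE; case: (phi a =P y) => [<-|ne] /=; last first.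
  by rewrite add0n; case: eqP => // e; case: ne.
rewrite eqxx /=; case: k => [n|n] //=.
by rewrite add1n ltnS leq_eqVlt.
Qed.

Lemma card_compress (G G' : zmodType) (phi : G -> G') (A : {fset G}) :
  #|` compress phi A| = #|` A|.
Proof.
elim/fset1U_rect: A => [|a X aX IH].
  apply/eqP; rewrite cardfs0 cardfs_eq0; apply/eqP/fsetP => -[y k].
  rewrite in_compress inE; apply/negP => /andP[_].
  suff -> : fib phi fset0 y = fset0 by rewrite cardfs0.
  by apply/fsetP => z; rewrite !inE.
rewrite compress1U // !cardfsU1 IH aX; congr (_ + _)%N.
by rewrite in_compress /= ltnn.
Qed.

Lemma mem_sumset (K : zmodType) (A B : {fset K}) a b :
  a \in A -> b \in B -> a + b \in sumset A B.
Proof. by move=> aA bB; apply: (@in_imfset2 _ _ _ (fun _ => K)). Qed.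

Lemma sumsetP (K : zmodType) (A B : {fset K}) z :
  reflect (exists a b, [/\ a \in A, b \in B & z = a + b]) (z \in sumset A B).
Proof.
apply: (iffP (imfset2P _ _ _ _ _)) => [[a aA [b bB ->]]|[a [b [aA bB ->]]]].
  by exists a, b.
by exists a => //; exists b.
Qed.

Lemma card_transl (K : zmodType) (X : {fset K}) e :
  #|` [fset z + e | z in X]| = #|` X|.
Proof. by rewrite card_imfset //= => u v /addIr. Qed.

Lemma transl_sum (K : zmodType) (X : {fset K}) d :
  \sum_(w <- [fset z + d | z in X]) w = \sum_(z <- X) (z + d).
Proof. by rewrite big_imfset //= => u v _ _ /addIr. Qed.

Lemma sumset_transl_sub (K : zmodType) (X Y : {fset K}) y :
  y \in Y -> [fset z + y | z in X] `<=` sumset X Y.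
Proof.
move=> yY; apply/fsubsetP => w /imfsetP[z /= zX ->]; exact: mem_sumset.
Qed.

Lemma L1 (G G' : zmodType) (phi : {additive G -> G'})
  (tf : forall (x : G) (n : nat), phi x = 0 -> x *+ n.+1 = 0 -> x = 0) n :
  forall X Y : {fset G}, (#|` Y| <= n)%N -> X != fset0 -> Y != fset0 ->
  {in Y &, forall y y', phi y = phi y'} ->
  (#|` X| + #|` Y| <= (#|` sumset X Y|).+1)%N.
Proof.
elim: n => [|n IH] X Y hY X0 Y0 hphi.
  by move: hY; rewrite leqn0 cardfs_eq0 (negPf Y0).
case: (fset_0Vmem Y) => [Ye|[y0 y0Y]]; first by move: Y0; rewrite Ye eqxx.
have hX : (#|` X| <= #|` sumset X Y|)%N.
  by rewrite -(card_transl X y0) fsubset_leq_card // sumset_transl_sub.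
have [Y1|Y2] := leqP #|` Y| 1; first by rewrite -addn1 leq_add.
pose P := all (fun x => all (fun y => [fset z + (x - y) | z in Y] `<=` X) Y) X.
case: (boolP P) => [/allP HP|/allPn[x xX /allPn[y yY nsub]]].
  exfalso.
  have [y1 [y1Y y10]] : exists y1, y1 \in Y /\ y1 != y0.
    move: Y2; rewrite (cardfsD1 y0) y0Y add1n ltnS cardfs_gt0 => /fset0Pn[y1].
    by rewrite in_fsetD1 => /andP[h1 h2]; exists y1.
  pose d := y1 - y0.
  have pd : phi d = 0 by rewrite raddfB (hphi y1 y0) // subrr.
  have sub : [fset z + d | z in X] `<=` X.
    apply/fsubsetP => w /imfsetP[z /= zX ->].
    have /fsubsetP := allP (HP z zX) y0 y0Y; apply.
    apply/imfsetP; exists y1 => //=; by rewrite /d addrCA.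
  have eqX : [fset z + d | z in X] = X.
    by apply/eqP; rewrite eqEfcard sub card_transl leqnn.
  have hs : \sum_(z <- X) z = \sum_(z <- X) z + d *+ #|` X|.
    rewrite -{1}eqX transl_sum big_split /=; congr (_ + _).
    by rewrite big_const_seq count_predT iter_addr_0.
  move: hs => /(congr1 (fun t => t - \sum_(z <- X) z)); rewrite subrr addrC addKr.
  move: X0; rewrite -cardfs_gt0; case: #|` X| => // m _ /esym hm.
  have d0 := tf d m pd hm.
  by move: y10; rewrite -subr_eq0 -/d d0 eqxx.
set e := x - y in nsub.
pose Ye := [fset z + e | z in Y].
pose X' := X `|` Ye.
pose Y' := [fset z in Y | z + e \in X].
have yY' : y \in Y' by rewrite !inE yY /= /e addrC subrK.
have [w wYe wX] := fsubsetPn _ _ nsub.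
case/imfsetP: wYe => w' /= w'Y ew.
have sY' : Y' `<=` Y `\ w'.
  apply/fsubsetP => z; rewrite !inE => /andP[zY zX]; rewrite zY andbT.
  by apply/eqP => zw; move: wX; rewrite ew -zw zX.
have cY' : (#|` Y'| < #|` Y|)%N.
  by have := fsubset_leq_card sY'; rewrite (cardfsD1 w' Y) w'Y add1n ltnS.
have hI : X `&` Ye = [fset z + e | z in Y'].
  apply/fsetP => v; apply/idP/idP.
    rewrite in_fsetI => /andP[vX /imfsetP[z /= zY ev]]; rewrite ev in vX *.
    by apply/imfsetP; exists z => //=; rewrite /Y' !inE zY vX.
  case/imfsetP => z /=; rewrite !inE => /andP[zY zX] ->.
  by rewrite zX /=; apply/imfsetP; exists z.
have cX' : (#|` X'| + #|` Y'| = #|` X| + #|` Y|)%N.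
  rewrite cardfsU hI !card_transl.
  have := fsubset_leq_card (fsubsetIl X Ye); rewrite hI card_transl.
  have := fsubset_leq_card (fsubsetIr X Ye); rewrite hI !card_transl => h1 _.
  by rewrite subnK // (leq_trans h1 (leq_addl _ _)).
have sS : sumset X' Y' `<=` sumset X Y.
  apply/fsubsetP => v /sumsetP[a [b [aX' bY' ->]]].
  move: bY'; rewrite !inE => /andP[bY bX].
  case/fsetUP: aX' => [aX|/imfsetP[c /= cY ->]]; first exact: mem_sumset.
  by rewrite -addrA [e + b]addrC addrC; apply: mem_sumset.
have c1 : (#|` Y'| <= n)%N by rewrite -ltnS (leq_trans cY' hY).
have c2 : X' != fset0.
  by apply/fset0Pn; case/fset0Pn: X0 => a aX; exists a; rewrite in_fsetU aX.
have c3 : Y' != fset0 by apply/fset0Pn; exists y.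
have c4 : {in Y' &, forall y y', phi y = phi y'}.
  by move=> a b; rewrite !inE => /andP[aY _] /andP[bY _]; apply: hphi.
rewrite -cX'; apply: leq_trans (IH X' Y' c1 c2 c3 c4) _.
by rewrite ltnS fsubset_leq_card.
Qed.

Lemma compress_sumset (G G' : zmodType) (phi : {additive G -> G'})
  (tf : forall (x : G) (n : nat), phi x = 0 -> x *+ n.+1 = 0 -> x = 0)
  (A B : {fset G}) :
  sumset (compress phi A) (compress phi B) `<=` compress phi (sumset A B).
Proof.
apply/fsubsetP => v /sumsetP[[x i] [[y j] [hA hB ->]]].
move: hA hB; rewrite !in_compress; case: i => // n; case: j => // m /= hn hm.
have X0 : fib phi A x != fset0 by rewrite -cardfs_gt0; case: #|` _| hn.
have Y0 : fib phi B y != fset0 by rewrite -cardfs_gt0; case: #|` _| hm.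
have hphi : {in fib phi B y &, forall u v, phi u = phi v}.
  by move=> u w; rewrite !inE => /andP[_ /eqP ->] /andP[_ /eqP ->].
have := L1 tf (leqnn _) X0 Y0 hphi.
have sub : sumset (fib phi A x) (fib phi B y) `<=` fib phi (sumset A B) (x + y).
  apply/fsubsetP => w /sumsetP[a [b [+ + ->]]]; rewrite !inE.
  move=> /andP[aA /eqP pa] /andP[bB /eqP pb].
  by rewrite mem_sumset //= raddfD pa pb eqxx.
have := fsubset_leq_card sub.
move: hn hm; set a := #|` fib phi A x|; set b := #|` fib phi B y|.
set c := #|` sumset _ _|; set d := #|` fib phi _ _|.
move=> hn hm h1 h2.
lia.
Qed.

Lemma compress_sub (G G' : zmodType) (phi : G -> G') (U A : {fset G}) :
  U `<=` A -> compress phi U `<=` compress phi A.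
Proof.
move=> /fsubsetP sUA; apply/fsubsetP => -[x k]; rewrite !in_compress.
case/andP => -> h; apply: leq_trans h _; apply: fsubset_leq_card.
by apply/fsubsetP => z; rewrite !inE => /andP[/sUA -> ->].
Qed.

Lemma sumsetSl (K : zmodType) (A A' B : {fset K}) :
  A `<=` A' -> sumset A B `<=` sumset A' B.
Proof.
move=> /fsubsetP s; apply/fsubsetP => v /sumsetP[a [b [aA bB ->]]].
by apply: mem_sumset => //; apply: s.
Qed.

Lemma compress_neq0 (G G' : zmodType) (phi : G -> G') (A : {fset G}) :
  A != fset0 -> compress phi A != fset0.
Proof. by rewrite -!cardfs_gt0 card_compress. Qed.

Lemma cardR_compress (R : realType) (G G' : zmodType) (phi : G -> G') (A : {fset G}) :
  card_R R (compress phi A) = card_R R A.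
Proof. by rewrite /card_R card_compress. Qed.

Lemma cardR_le (R : realType) (K K' : choiceType) (A : {fset K}) (B : {fset K'}) :
  (#|` A| <= #|` B|)%N -> card_R R A <= card_R R B.
Proof. by rewrite /card_R ler_nat. Qed.

Lemma cardR_ge0 (R : realType) (K : choiceType) (A : {fset K}) : 0 <= card_R R A.
Proof. by rewrite /card_R ler0n. Qed.

Lemma inf_mono (R : realType) (S T : set R) :
  (exists t, T t) -> (forall t, T t -> exists2 s, S s & s <= t) ->
  (forall s, S s -> 0 <= s) -> inf S <= inf T.
Proof.
move=> [t0 Tt0] hTS hS0; apply: lb_le_inf; first by exists t0.
move=> t Tt; have [s Ss st] := hTS t Tt; apply: le_trans st.
by apply: ge_inf => //; exists 0 => u Su; apply: hS0.
Qed.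

Lemma card_csum (G G' : zmodType) (phi : {additive G -> G'})
  (tf : forall (x : G) (n : nat), phi x = 0 -> x *+ n.+1 = 0 -> x = 0)
  (A B : {fset G}) :
  (#|` sumset (compress phi A) (compress phi B)| <= #|` sumset A B|)%N.
Proof.
by rewrite -(card_compress phi (sumset A B)) fsubset_leq_card // compress_sumset.
Qed.

Lemma card_csum3 (G G' : zmodType) (phi : {additive G -> G'})
  (tf : forall (x : G) (n : nat), phi x = 0 -> x *+ n.+1 = 0 -> x = 0)
  (A B U : {fset G}) :
  (#|` sumset (sumset (compress phi A) (compress phi B)) (compress phi U)|
     <= #|` sumset (sumset A B) U|)%N.
Proof.
apply: leq_trans (card_csum tf (sumset A B) U).
by apply: fsubset_leq_card; apply: sumsetSl; apply: compress_sumset.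
Qed.

End Helpers.
Import Helpers.

Theorem mainTheorem6 (R : realType) (G G' : zmodType) (phi : {additive G -> G'})
  (phi_surj : forall y : G', exists x : G, phi x = y)
  (ker_torsion_free : forall (x : G) (n : nat), phi x = 0 -> x *+ n.+1 = 0 -> x = 0)
  (U : {fset G}) :
  let CU := compress phi U in
  alpha R CU <= alpha R U /\
  alpha' R CU <= alpha' R U /\
  alpha'' R CU <= alpha'' R U /\
  (forall p : R, 1 < p -> beta_p p CU <= beta_p p U) /\
  beta' R CU <= beta' R U /\
  beta'' R CU <= beta'' R U.
Proof.
move=> CU; set tf := ker_torsion_free.
pose U0 := (U `|` [fset 0])%fset.
have U00 : U0 != fset0%fset by apply/fset0Pn; exists 0; rewrite in_fsetU in_fset1 eqxx orbT.
have UU0 : (U `<=` U0)%fset by apply: fsubsetUl.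
pose Z0 := [fset (0 : G)]%fset.
have Z00 : Z0 != fset0%fset by apply/fset0Pn; exists 0; rewrite in_fset1.
have CN := @compress_neq0 _ _ phi.
have CS := @compress_sub _ _ phi U.
split.
  apply: inf_mono.
  - by eexists; exists U0, U0; split.
  - move=> t [A [B [A0 B0 UA UB ->]]].
    eexists; first by exists (compress phi A), (compress phi B); split; auto.
    rewrite !cardR_compress; apply: ler_wpM2r; first by rewrite invr_ge0 sqrtr_ge0.
    exact/cardR_le/card_csum.
  - move=> s [A [B [_ _ _ _ ->]]]; apply: divr_ge0; [exact: cardR_ge0|exact: sqrtr_ge0].
split.
  apply: inf_mono.
  - by eexists; exists U0, U0; split.
  - move=> t [A [B [A0 B0 UA UB [eAB ->]]]].
    eexists; first by exists (compress phi A), (compress phi B); split; rewrite ?card_compress; auto.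
    rewrite !cardR_compress; apply: ler_wpM2r; first by rewrite invr_ge0 cardR_ge0.
    exact/cardR_le/card_csum.
  - move=> s [A [B [_ _ _ _ [_ ->]]]]; apply: divr_ge0; exact: cardR_ge0.
split.
  apply: inf_mono.
  - by eexists; exists U0; split.
  - move=> t [A [A0 UA ->]].
    eexists; first by exists (compress phi A); split; auto.
    rewrite !cardR_compress; apply: ler_wpM2r; first by rewrite invr_ge0 cardR_ge0.
    exact/cardR_le/card_csum.
  - move=> s [A [_ _ ->]]; apply: divr_ge0; exact: cardR_ge0.
split.
  move=> p p1; apply: inf_mono.
  - by eexists; exists Z0, Z0; split.
  - move=> t [A [B [A0 B0 ->]]].
    eexists; first by exists (compress phi A), (compress phi B); split; auto.
    rewrite !cardR_compress; apply: ler_wpM2r.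
      by rewrite invr_ge0 mulr_ge0 // powR_ge0.
    exact/cardR_le/card_csum3.
  - move=> s [A [B [_ _ ->]]]; apply: divr_ge0; first exact: cardR_ge0.
    by rewrite mulr_ge0 // powR_ge0.
split.
  apply: inf_mono.
  - by eexists; exists Z0, Z0; split.
  - move=> t [A [B [A0 B0 eAB ->]]].
    eexists; first by exists (compress phi A), (compress phi B); split; rewrite ?card_compress; auto.
    rewrite !cardR_compress; apply: ler_wpM2r; first by rewrite invr_ge0 sqrtr_ge0.
    exact/cardR_le/card_csum3.
  - move=> s [A [B [_ _ _ ->]]]; apply: divr_ge0; [exact: cardR_ge0|exact: sqrtr_ge0].
apply: inf_mono.
- by eexists; exists Z0; split.
- move=> t [A [A0 ->]].
  eexists; first by exists (compress phi A); split; auto.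
  rewrite !cardR_compress; apply: ler_wpM2r; first by rewrite invr_ge0 cardR_ge0.
  exact/cardR_le/card_csum3.
- move=> s [A [_ ->]]; apply: divr_ge0; exact: cardR_ge0.
Qed.
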